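(* Let $\mathcal C$ be a category and $S\colon\mathcal C\to\mathcal C$ an auto-equivalence. Then: (1) $S'$ is an automorphism of the category $\mathcal C_{/S}\#\mathbb Z$; (2) $H\colon\mathcal C\to\mathcal C_{/S}\#\mathbb Z$ is an equivalence; (3) $S'H\cong HS$ (natural isomorphism).
   Context: $\Bbbk$ is a commutative ring; all categories and functors are $\Bbbk$-linear. The colimit orbit category $\mathcal C_{/S}$ is the $\mathbb Z$-graded category with the objects of $\mathcal C$ and $\mathcal C_{/S}(X,Y)=\bigoplus_{r\in\mathbb Z}\mathcal C^r_{/S}(X,Y)$, where $\mathcal C^r_{/S}(X,Y):=\varinjlim_{m\ge r}\mathcal C(S^{m-r}X,S^mY)$, the transition maps $\mathcal C(S^{m-r}X,S^mY)\to\mathcal C(S^{m+1-r}X,S^{m+1}Y)$ being given by $S$; composition of $[g]\in\mathcal C^b_{/S}(Y,Z)$ represented by $g\colon S^{m-b}Y\to S^mZ$ and $[f]\in\mathcal C^a_{/S}(X,Y)$ represented by $f\colon S^{m-b-a}X\to S^{m-b}Y$ is $[gf]\in\mathcal C^{a+b}_{/S}(X,Z)$, extended bilinearly. For a $\mathbb Z$-graded category $\mathcal B$, $\mathcal B\#\mathbb Z$ has objects $X^{(i)}$ ($X\in\mathcal B$, $i\in\mathbb Z$), $(\mathcal B\#\mathbb Z)(X^{(i)},Y^{(j)})=\mathcal B^{i-j}(X,Y)$, composition from $\mathcal B$. $S'\colon\mathcal C_{/S}\#\mathbb Z\to\mathcal C_{/S}\#\mathbb Z$ is $S'X^{(i)}=X^{(i-1)}$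 and the identity map $\mathcal C^{i-j}_{/S}(X,Y)\to\mathcal C^{i-j}_{/S}(X,Y)$ on morphisms. $H\colon\mathcal C\to\mathcal C_{/S}\#\mathbb Z$ is $HX=X^{(0)}$, $Hf=[f]\in\varinjlim_{m\ge0}\mathcal C(S^mX,S^mY)$. *)

(* Defs.v *)
From Stdlib Require Import ClassicalEpsilon.
From HB Require Import structures.
From mathcomp Require Import all_boot all_order all_algebra zify.
Set Implicit Arguments.
Unset Strict Implicit.
Unset Printing Implicit Defensive.
Import Order.TTheory GRing.Theory Num.Theory.
Local Open Scope ring_scope.

Record catd (k : comPzRingType) := CatD {
  obj : Type;
  hom : obj -> obj -> Type;
  hadd : forall X Y, hom X Y -> hom X Y -> hom X Y;
  hscale : forall X Y, k -> hom X Y -> hom X Y;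
  comp : forall X Y Z, hom Y Z -> hom X Y -> hom X Z;
  idm : forall X, hom X X
}.
Arguments obj {k} c : rename.
Arguments hom {k} c _ _ : rename.
Arguments hadd {k C X Y} : rename.
Arguments hscale {k C X Y} : rename.
Arguments comp {k C X Y Z} : rename.
Arguments idm {k C} X : rename.

Record LinCat (k : comPzRingType) := LinCatMk {
  lobj : Type;
  lhom : lobj -> lobj -> lmodType k;
  lcomp : forall X Y Z, lhom Y Z -> lhom X Y -> lhom X Z;
  lidm : forall X, lhom X X;
  lcompA : forall X Y Z W (h : lhom Z W) (g : lhom Y Z) (f : lhom X Y),
      lcomp h (lcomp g f) = lcomp (lcomp h g) f;
  lcomp1m : forall X Y (f : lhom X Y), lcomp (lidm Y) f = f;
  lcompm1 : forall X Y (f : lhom X Y), lcomp f (lidm X) = f;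
  lcomp_linl : forall X Y Z (a : k) (g1 g2 : lhom Y Z) (f : lhom X Y),
      lcomp (a *: g1 + g2) f = a *: lcomp g1 f + lcomp g2 f;
  lcomp_linr : forall X Y Z (a : k) (g : lhom Y Z) (f1 f2 : lhom X Y),
      lcomp g (a *: f1 + f2) = a *: lcomp g f1 + lcomp g f2
}.
Arguments lobj {k} l : rename.
Arguments lhom {k} l _ _ : rename.
Arguments lcomp {k L X Y Z} : rename.
Arguments lidm {k L} X : rename.

Definition catd_of (k : comPzRingType) (C : LinCat k) : catd k :=
  @CatD k (lobj C) (fun X Y => (lhom C X Y : Type))
    (fun X Y f g => f + g) (fun X Y a f => a *: f)
    (fun X Y Z g f => lcomp g f) (fun X => lidm X).
Coercion catd_of : LinCat >-> catd.

Record functor (k : comPzRingType) (A B : catd k) := Functor {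
  fobj : obj A -> obj B;
  fhom : forall X Y, hom A X Y -> hom B (fobj X) (fobj Y)
}.
Arguments fobj {k A B} F X : rename.
Arguments fhom {k A B} F {X Y} f : rename.

Definition is_linfunctor (k : comPzRingType) (A B : catd k) (F : functor A B) :=
  [/\ forall X Y Z (g : hom A Y Z) (f : hom A X Y),
        fhom F (comp g f) = comp (fhom F g) (fhom F f),
      forall X, fhom F (idm X) = idm (fobj F X),
      forall X Y (f g : hom A X Y), fhom F (hadd f g) = hadd (fhom F f) (fhom F g)
    & forall X Y (a : k) (f : hom A X Y), fhom F (hscale a f) = hscale a (fhom F f)].

Definition id_functor (k : comPzRingType) (A : catd k) : functor A A :=
  @Functor k A A (fun X => X) (fun X Y f => f).

Definition comp_functor (k : comPzRingType) (A B D : catd k)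
  (G : functor B D) (F : functor A B) : functor A D :=
  @Functor k A D (fun X => fobj G (fobj F X)) (fun X Y f => fhom G (fhom F f)).

Definition natiso (k : comPzRingType) (A B : catd k) (F G : functor A B) :=
  exists eta : forall X, hom B (fobj F X) (fobj G X),
    (forall X, exists h : hom B (fobj G X) (fobj F X),
        comp (eta X) h = idm (fobj G X) /\ comp h (eta X) = idm (fobj F X)) /\
    (forall X Y (f : hom A X Y), comp (fhom G f) (eta X) = comp (eta Y) (fhom F f)).

Definition is_equivalence (k : comPzRingType) (A B : catd k) (F : functor A B) :=
  is_linfunctor F /\
  exists G : functor B A, is_linfunctor G /\
    natiso (comp_functor G F) (id_functor A) /\
    natiso (comp_functor F G) (id_functor B).

Definition is_automorphism (k : comPzRingType) (A : catd k) (F : functor A A) :=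
  [/\ is_linfunctor F, bijective (fobj F)
    & forall X Y, bijective (@fhom k A A F X Y)].

Section Orbit.
Variables (k : comPzRingType) (C : LinCat k) (S : functor C C).

Definition Sn (n : nat) (X : lobj C) : lobj C := iter n (fobj S) X.

Fixpoint liftn (n : nat) (X Y : lobj C) (p q : nat)
    (f : lhom C (Sn p X) (Sn q Y)) : lhom C (Sn (n + p) X) (Sn (n + q) Y) :=
  match n return lhom C (Sn (n + p) X) (Sn (n + q) Y) with
  | 0 => f
  | n'.+1 => fhom S (liftn n' f)
  end.

Definition castH (X Y : lobj C) (p p' q q' : nat) (e1 : p = p') (e2 : q = q')
    (f : lhom C (Sn p X) (Sn q Y)) : lhom C (Sn p' X) (Sn q' Y) :=
  match e1 in _ = p1, e2 in _ = q1 return lhom C (Sn p1 X) (Sn q1 Y) with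
  | erefl, erefl => f end.

(* A representative of an element of C^r_{/S}(X,Y) = colim_{m >= r, m >= 0}
   C(S^{m-r} X, S^m Y): the index m is rq, m - r is rp. *)
Record orep (r : int) (X Y : lobj C) := ORep {
  rp : nat; rq : nat;
  rdiff : (rq%:Z - rp%:Z)%R = r;
  rf : lhom C (Sn rp X) (Sn rq Y)
}.

Definition orel (r : int) (X Y : lobj C) (x y : orep r X Y) : Prop :=
  exists (n n' : nat) (e1 : (n + rp x = n' + rp y)%N) (e2 : (n + rq x = n' + rq y)%N),
    castH e1 e2 (liftn n (rf x)) = liftn n' (rf y).

Definition ohom (r : int) (X Y : lobj C) :=
  { A : orep r X Y -> Prop | exists x, A = orel x }.

Definition ocls (r : int) (X Y : lobj C) (x : orep r X Y) : ohom r X Y :=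
  exist _ (orel x) (ex_intro _ x erefl).

Definition orepr (r : int) (X Y : lobj C) (A : ohom r X Y) : orep r X Y :=
  proj1_sig (constructive_indefinite_description _ (proj2_sig A)).

Lemma nat_of_diff (p q p' q' : nat) (r : int) :
  (q%:Z - p%:Z)%R = r -> (q'%:Z - p'%:Z)%R = r -> (p' + q = p + q')%N.
Proof.
move=> e e'; apply/eqP; rewrite -eqz_nat !PoszD; apply/eqP; lia.
Qed.

Lemma diff_lift (n p q : nat) (r : int) :
  (q%:Z - p%:Z)%R = r -> ((n + q)%:Z - (n + p)%:Z)%R = r.
Proof. by move=> <-; rewrite !PoszD; lia. Qed.

Definition orep_add (r : int) (X Y : lobj C) (x y : orep r X Y) : orep r X Y :=
  @ORep r X Y (rp y + rp x) (rp y + rq x) (diff_lift (rp y) (rdiff x))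
    (liftn (rp y) (rf x) +
     castH (addnC (rp x) (rp y)) (esym (nat_of_diff (rdiff x) (rdiff y)))
       (liftn (rp x) (rf y))).

Definition orep_scale (r : int) (X Y : lobj C) (a : k) (x : orep r X Y) :
    orep r X Y := @ORep r X Y (rp x) (rq x) (rdiff x) (a *: rf x).

Lemma diff_comp (p q p' q' : nat) (a b c : int) :
  (q%:Z - p%:Z)%R = a -> (q'%:Z - p'%:Z)%R = b -> (a + b)%R = c ->
  ((q + q')%:Z - (p' + p)%:Z)%R = c.
Proof. by move=> <- <- <-; rewrite !PoszD; lia. Qed.

(* Composition of representatives: for f : S^p X -> S^q Y (in C^a) and
   g : S^p' Y -> S^q' Z (in C^b), lift f by S^p' and g by S^q, so that they
   become composable at the common object S^(q+p') Y, and compose. *)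
Definition orep_comp (a b c : int) (e : (a + b)%R = c) (X Y Z : lobj C)
    (y : orep b Y Z) (x : orep a X Y) : orep c X Z :=
  @ORep c X Z (rp y + rp x) (rq x + rq y) (diff_comp (rdiff x) (rdiff y) e)
    (lcomp (liftn (rq x) (rf y))
       (castH erefl (addnC (rp y) (rq x)) (liftn (rp y) (rf x)))).

Definition ohom_add (r : int) (X Y : lobj C) (A B : ohom r X Y) : ohom r X Y :=
  ocls (orep_add (orepr A) (orepr B)).
Definition ohom_scale (r : int) (X Y : lobj C) (a : k) (A : ohom r X Y) :
    ohom r X Y := ocls (orep_scale a (orepr A)).
Definition ohom_comp (a b c : int) (e : (a + b)%R = c) (X Y Z : lobj C)
    (B : ohom b Y Z) (A : ohom a X Y) : ohom c X Z :=
  ocls (orep_comp e (orepr B) (orepr A)).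

Lemma diff00 (i : int) : ((0%N)%:Z - (0%N)%:Z)%R = (i - i)%R.
Proof. by rewrite !subrr. Qed.

Lemma diff_trans (i j l : int) : ((i - j) + (j - l))%R = (i - l)%R.
Proof. by rewrite addrA subrK. Qed.

Definition smash : catd k :=
  @CatD k (lobj C * int)
    (fun Xi Yj => ohom (Xi.2 - Yj.2) Xi.1 Yj.1)
    (fun Xi Yj A B => ohom_add A B)
    (fun Xi Yj a A => ohom_scale a A)
    (fun Xi Yj Zl B A => ohom_comp (diff_trans Xi.2 Yj.2 Zl.2) B A)
    (fun Xi => ocls (@ORep (Xi.2 - Xi.2) Xi.1 Xi.1 0 0 (diff00 Xi.2)
                        (lidm Xi.1))).

Lemma diff_shift (i j : int) : (i - j)%R = ((i - 1) - (j - 1))%R.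
Proof. by rewrite opprB addrA subrK. Qed.

Definition Sprime : functor smash smash :=
  @Functor k smash smash (fun Xi => (Xi.1, (Xi.2 - 1)%R))
    (fun Xi Yj A => ecast r (ohom r Xi.1 Yj.1) (diff_shift Xi.2 Yj.2) A).

Definition Hfun : functor C smash :=
  @Functor k C smash (fun X => (X, 0%R))
    (fun X Y f => ocls (@ORep (0 - 0)%R X Y 0 0 (diff00 0) f)).

End Orbit.

(* Main.v *)
Require Import Defs.
From Stdlib Require Import ClassicalEpsilon JMeq ProofIrrelevance FunctionalExtensionality PropExtensionality.
From HB Require Import structures.
From mathcomp Require Import all_boot all_order all_algebra zify.
Set Implicit Arguments. Unset Strict Implicit. Unset Printing Implicit Defensive.
Import GRing.Theory.

Arguments castH : simpl never.
Section Orb.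
Variables (k : comPzRingType) (C : LinCat k) (S : functor C C).
Hypothesis HS : is_linfunctor S.

Local Notation lift := (@liftn _ _ S).
Local Notation Sn := (@Sn _ C S).
Local Notation L := (lhom C).

Lemma fhomJ A B A' B' (f : L A B) (f' : L A' B') :
  A = A' -> B = B' -> JMeq f f' -> JMeq (@fhom _ _ _ S A B f) (@fhom _ _ _ S A' B' f').
Proof. by move=> *; subst. Qed.

Lemma compJ A B D A' B' D' (f : L A B) (g : L B D) (f' : L A' B') (g' : L B' D') :
  A = A' -> B = B' -> D = D' -> JMeq f f' -> JMeq g g' -> JMeq (lcomp g f) (lcomp g' f').
Proof. by move=> *; subst. Qed.

Lemma addJ A B A' B' (f g : L A B) (f' g' : L A' B') :
  A = A' -> B = B' -> JMeq f f' -> JMeq g g' -> JMeq (f + g)%R (f' + g')%R.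
Proof. by move=> *; subst. Qed.

Lemma scaleJ A B A' B' (a : k) (f : L A B) (f' : L A' B') :
  A = A' -> B = B' -> JMeq f f' -> JMeq (a *: f)%R (a *: f')%R.
Proof. by move=> *; subst. Qed.

Lemma castHJ X Y p p' q q' (e1 : p = p') (e2 : q = q') (f : L (Sn p X) (Sn q Y)) :
  JMeq (castH e1 e2 f) f.
Proof. by case: p' / e1; case: q' / e2. Qed.

Lemma castH_id X Y p q (e1 : p = p) (e2 : q = q) (f : L (Sn p X) (Sn q Y)) :
  castH e1 e2 f = f.
Proof. exact: JMeq_eq (castHJ _ _ _). Qed.

Lemma SnE n p X : Sn (n + p) X = Sn n (Sn p X).
Proof. by rewrite /Defs.Sn iterD. Qed.

Lemma SnD m n p X : Sn (m + (n + p)) X = Sn (m + n + p) X.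
Proof. by rewrite addnA. Qed.

Lemma lift_comp n X Y Z p q s (f : L (Sn p X) (Sn q Y)) (g : L (Sn q Y) (Sn s Z)) :
  lift n (lcomp g f) = lcomp (lift n g) (lift n f).
Proof.
case: HS => Hc _ _ _; elim: n => [|n IH] //=.
by rewrite IH; exact: Hc.
Qed.

Lemma lift_add n X Y p q (f g : L (Sn p X) (Sn q Y)) :
  lift n (f + g)%R = (lift n f + lift n g)%R.
Proof.
case: HS => _ _ Ha _; elim: n => [|n IH] //=.
by rewrite IH; exact: Ha.
Qed.

Lemma lift_scale n X Y p q (a : k) (f : L (Sn p X) (Sn q Y)) :
  lift n (a *: f)%R = (a *: lift n f)%R.
Proof.
case: HS => _ _ _ Hs; elim: n => [|n IH] //=.
by rewrite IH; exact: Hs.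
Qed.

Lemma lift_id n X p : @liftn _ _ S n X X p p (lidm (Sn p X)) = lidm (Sn (n + p) X).
Proof.
case: HS => _ Hi _ _; elim: n => [|n IH] //=.
by rewrite IH; exact: Hi.
Qed.

Lemma liftJ m n X Y p q (f : L (Sn p X) (Sn q Y)) :
  JMeq (lift m (lift n f)) (lift (m + n) f).
Proof.
elim: m => [|m IH] //=.
by apply: fhomJ => //; rewrite /Defs.Sn /= ?addnA.
Qed.

Lemma lift_eqJ n n' X Y p q p' q' (f : L (Sn p X) (Sn q Y)) (f' : L (Sn p' X) (Sn q' Y)) :
  n = n' -> p = p' -> q = q' -> JMeq f f' -> JMeq (lift n f) (lift n' f').
Proof. by move=> *; subst. Qed.


Local Notation rep := (@orep _ C S).

Lemma orep_ext r X Y (x y : rep r X Y) :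
  rp x = rp y -> rq x = rq y -> JMeq (rf x) (rf y) -> x = y.
Proof.
case: x y => p q d f [p' q' d' f'] /= e1 e2; subst p' q' => H.
have E := JMeq_eq H; subst f'.
by rewrite (proof_irrelevance _ d d').
Qed.

Definition liftrep n r X Y (x : rep r X Y) : rep r X Y :=
  ORep (diff_lift n (rdiff x)) (lift n (rf x)).

Lemma liftrepD m n r X Y (x : rep r X Y) : liftrep m (liftrep n x) = liftrep (m + n) x.
Proof. by apply: orep_ext => /=; [exact: addnA | exact: addnA | exact: liftJ]. Qed.

Lemma liftrep0 r X Y (x : rep r X Y) : liftrep 0 x = x.
Proof. by apply: orep_ext. Qed.

Lemma orelP r X Y (x y : rep r X Y) : orel x y <-> exists a b, liftrep a x = liftrep b y.
Proof.
split.
- case=> n [n'] [e1] [e2] H; exists n, n'; apply: orep_ext => //=.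
  rewrite -H; apply: JMeq_sym; exact: castHJ.
- case=> a [b] E; exists a, b.
  have e1 := f_equal (@rp _ _ _ _ _ _) E; have e2 := f_equal (@rq _ _ _ _ _ _) E.
  simpl in e1, e2; exists e1, e2.
  apply: JMeq_eq; apply: JMeq_trans (castHJ _ _ _) _.
  change (JMeq (rf (liftrep a x)) (rf (liftrep b y))); by rewrite E.
Qed.

Lemma orel_refl r X Y (x : rep r X Y) : orel x x.
Proof. by apply/orelP; exists 0, 0. Qed.

Lemma orel_sym r X Y (x y : rep r X Y) : orel x y -> orel y x.
Proof. by move/orelP=> [a [b E]]; apply/orelP; exists b, a. Qed.

Lemma orel_trans r X Y (x y z : rep r X Y) : orel x y -> orel y z -> orel x z.
Proof.
move/orelP=> [a [b E1]] /orelP [c [d E2]]; apply/orelP; exists (c + a), (b + d).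
by rewrite -!liftrepD E1 liftrepD addnC -liftrepD E2 liftrepD.
Qed.

Lemma ocls_eq r X Y (x y : rep r X Y) : ocls x = ocls y <-> orel x y.
Proof.
split.
- move/(f_equal (@proj1_sig _ _)) => /= E.
  have := orel_refl y; by rewrite -E.
- move=> H; apply: ProofIrrelevanceTheory.subset_eq_compat.
  apply: functional_extensionality => z; apply: propositional_extensionality.
  split; [exact: orel_trans (orel_sym H) | exact: orel_trans H].
Qed.

Lemma ocls_repr r X Y (A : ohom S r X Y) : ocls (orepr A) = A.
Proof.
case: A => P h; rewrite /orepr /=.
case: (constructive_indefinite_description _ h) => x /= Ex.
by apply: ProofIrrelevanceTheory.subset_eq_compat.
Qed.

Lemma orepr_ocls r X Y (x : rep r X Y) : orel (orepr (ocls x)) x.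
Proof. by apply/ocls_eq; rewrite ocls_repr. Qed.

Lemma ohom_ind r X Y (P : ohom S r X Y -> Prop) : (forall x, P (ocls x)) -> forall A, P A.
Proof. by move=> H A; rewrite -(ocls_repr A). Qed.

Lemma ocls_lift n r X Y (x : rep r X Y) : ocls (liftrep n x) = ocls x.
Proof. by apply/ocls_eq/orelP; exists 0, n; rewrite liftrep0. Qed.

Ltac jt t := apply: (@JMeq_trans _ _ _ _ t).
Ltac leqj := apply: lift_eqJ; try lia; try exact: castHJ; try exact: JMeq_refl.
Ltac objeq := rewrite /Defs.Sn; f_equal; lia.

Lemma add_liftl a r X Y (x y : rep r X Y) :
  orep_add (liftrep a x) y = liftrep a (orep_add x y).
Proof.
have Hxy := nat_of_diff (rdiff x) (rdiff y).
apply: orep_ext => /=; try lia.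
rewrite lift_add; apply: addJ; try objeq.
- jt (lift (rp y + a) (rf x)); first exact: liftJ.
  apply: JMeq_sym; jt (lift (a + rp y) (rf x)); first exact: liftJ.
  by apply: lift_eqJ => //; lia.
- jt (lift (a + rp x) (rf y)); first exact: castHJ.
  apply: JMeq_sym; jt (lift a (lift (rp x) (rf y))); last exact: liftJ.
  apply: lift_eqJ; try lia; try exact: castHJ.
Qed.

Lemma add_liftr a r X Y (x y : rep r X Y) :
  orep_add x (liftrep a y) = liftrep a (orep_add x y).
Proof.
have Hxy := nat_of_diff (rdiff x) (rdiff y).
apply: orep_ext => /=; try lia.
rewrite lift_add; apply: addJ; try objeq.
- apply: JMeq_sym; exact: liftJ.
- jt (lift (rp x) (lift a (rf y))); first exact: castHJ.
  jt (lift (rp x + a) (rf y)); first exact: liftJ.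
  apply: JMeq_sym; jt (lift a (lift (rp x) (rf y))).
    apply: lift_eqJ; try lia; try exact: castHJ.
  jt (lift (a + rp x) (rf y)); first exact: liftJ.
  by apply: lift_eqJ => //; lia.
Qed.


Lemma comp_liftl n (ra rb rc : int) (e : (ra + rb)%R = rc) X Y Z (y : rep rb Y Z) (x : rep ra X Y) :
  orep_comp e (liftrep n y) x = liftrep n (orep_comp e y x).
Proof.
apply: orep_ext => /=; try lia.
rewrite lift_comp; apply: compJ; try objeq.
- jt (lift (n + rp y) (rf x)); first exact: castHJ.
  apply: JMeq_sym; jt (lift n (lift (rp y) (rf x))).
    leqj.
  exact: liftJ.
- jt (lift (rq x + n) (rf y)); first exact: liftJ.
  apply: JMeq_sym; jt (lift (n + rq x) (rf y)); first exact: liftJ.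
  leqj.
Qed.

Lemma comp_liftr n (ra rb rc : int) (e : (ra + rb)%R = rc) X Y Z (y : rep rb Y Z) (x : rep ra X Y) :
  orep_comp e y (liftrep n x) = liftrep n (orep_comp e y x).
Proof.
apply: orep_ext => /=; try lia.
rewrite lift_comp; apply: compJ; try objeq.
- jt (lift (rp y) (lift n (rf x))); first exact: castHJ.
  jt (lift (rp y + n) (rf x)); first exact: liftJ.
  apply: JMeq_sym; jt (lift n (lift (rp y) (rf x))).
    leqj.
  jt (lift (n + rp y) (rf x)); first exact: liftJ.
  leqj.
- apply: JMeq_sym; exact: liftJ.
Qed.

Lemma scale_lift n (c : k) r X Y (x : rep r X Y) :
  orep_scale c (liftrep n x) = liftrep n (orep_scale c x).
Proof. by apply: orep_ext => //=; rewrite lift_scale. Qed.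

Lemma add_wd r X Y (x x' y y' : rep r X Y) :
  orel x x' -> orel y y' -> orel (orep_add x y) (orep_add x' y').
Proof.
move=> /orelP [a [a' Ea]] /orelP [b [b' Eb]].
apply: (@orel_trans _ _ _ _ (orep_add x' y)).
  by apply/orelP; exists a, a'; rewrite -!add_liftl Ea.
by apply/orelP; exists b, b'; rewrite -!add_liftr Eb.
Qed.

Lemma comp_wd (ra rb rc : int) (e : (ra + rb)%R = rc) X Y Z (y y' : rep rb Y Z) (x x' : rep ra X Y) :
  orel y y' -> orel x x' -> orel (orep_comp e y x) (orep_comp e y' x').
Proof.
move=> /orelP [a [a' Ea]] /orelP [b [b' Eb]].
apply: (@orel_trans _ _ _ _ (orep_comp e y' x)).
  by apply/orelP; exists a, a'; rewrite -!comp_liftl Ea.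
by apply/orelP; exists b, b'; rewrite -!comp_liftr Eb.
Qed.

Lemma scale_wd (c : k) r X Y (x x' : rep r X Y) :
  orel x x' -> orel (orep_scale c x) (orep_scale c x').
Proof.
move=> /orelP [a [a' Ea]]; apply/orelP; exists a, a'.
by rewrite -!scale_lift Ea.
Qed.

Lemma ohom_addE r X Y (x y : rep r X Y) : ohom_add (ocls x) (ocls y) = ocls (orep_add x y).
Proof. by apply/ocls_eq; apply: add_wd; exact: orepr_ocls. Qed.

Lemma ohom_scaleE (c : k) r X Y (x : rep r X Y) : ohom_scale c (ocls x) = ocls (orep_scale c x).
Proof. by apply/ocls_eq; apply: scale_wd; exact: orepr_ocls. Qed.

Lemma ohom_compE (ra rb rc : int) (e : (ra + rb)%R = rc) X Y Z (y : rep rb Y Z) (x : rep ra X Y) :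
  ohom_comp e (ocls y) (ocls x) = ocls (orep_comp e y x).
Proof. by apply/ocls_eq; apply: comp_wd; exact: orepr_ocls. Qed.


Lemma ocls_pi r X Y p q (d d' : (q%:Z - p%:Z)%R = r) (f : L (Sn p X) (Sn q Y)) :
  ocls (ORep d f) = ocls (ORep d' f).
Proof. by rewrite (proof_irrelevance _ d d'). Qed.

Lemma dcomp (p q s : nat) (ra rb rc : int) :
  (q%:Z - p%:Z)%R = ra -> (s%:Z - q%:Z)%R = rb -> (ra + rb)%R = rc -> (s%:Z - p%:Z)%R = rc.
Proof. move=> <- <- <-; lia. Qed.

Lemma comp_simple (ra rb rc : int) (e : (ra + rb)%R = rc) X Y Z p q s
  (dx : (q%:Z - p%:Z)%R = ra) (dy : (s%:Z - q%:Z)%R = rb)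
  (f : L (Sn p X) (Sn q Y)) (g : L (Sn q Y) (Sn s Z)) :
  ohom_comp e (ocls (ORep dy g)) (ocls (ORep dx f)) = ocls (ORep (dcomp dx dy e) (lcomp g f)).
Proof.
rewrite ohom_compE -(ocls_lift q (ORep _ (lcomp g f))); congr ocls; apply: orep_ext => //=.
by rewrite castH_id lift_comp.
Qed.

Lemma rep_at_p r X Y (x : rep r X Y) N : rp x <= N ->
  exists q (d : (q%:Z - N%:Z)%R = r) (f : L (Sn N X) (Sn q Y)), ocls x = ocls (ORep d f).
Proof.
move=> hN; have e : (N - rp x) + rp x = N by rewrite subnK.
have d := diff_lift (N - rp x) (rdiff x); rewrite e in d.
exists _, d, (castH e erefl (lift (N - rp x) (rf x))).
rewrite -(ocls_lift (N - rp x)); congr ocls; apply: orep_ext => //=.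
apply: JMeq_sym; exact: castHJ.
Qed.

Lemma rep_at_q r X Y (x : rep r X Y) N : rq x <= N ->
  exists p (d : (N%:Z - p%:Z)%R = r) (f : L (Sn p X) (Sn N Y)), ocls x = ocls (ORep d f).
Proof.
move=> hN; have e : (N - rq x) + rq x = N by rewrite subnK.
have d := diff_lift (N - rq x) (rdiff x); rewrite e in d.
exists _, d, (castH erefl e (lift (N - rq x) (rf x))).
rewrite -(ocls_lift (N - rq x)); congr ocls; apply: orep_ext => //=.
apply: JMeq_sym; exact: castHJ.
Qed.

Lemma idJ A A' : A = A' -> JMeq (lidm A : L A A) (lidm A' : L A' A').
Proof. by move=> ->. Qed.

Lemma ocls_id r X p (d : (p%:Z - p%:Z)%R = r) (d' : ((0%N)%:Z - (0%N)%:Z)%R = r) :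
  ocls (@ORep _ _ S r X X p p d (lidm (Sn p X))) = ocls (@ORep _ _ S r X X 0 0 d' (lidm X)).
Proof.
rewrite -(ocls_lift p (ORep d' _)); congr ocls; apply: orep_ext => /=; try lia.
rewrite (lift_id p X 0); apply: idJ; objeq.
Qed.

Lemma add_same r X Y p q (d1 d2 : (q%:Z - p%:Z)%R = r) (f1 f2 : L (Sn p X) (Sn q Y)) :
  ohom_add (ocls (ORep d1 f1)) (ocls (ORep d2 f2)) = ocls (ORep d1 (f1 + f2)%R).
Proof.
rewrite ohom_addE -(ocls_lift p (ORep d1 _)); congr ocls; apply: orep_ext => //=.
by rewrite castH_id lift_add.
Qed.


Lemma lcompDl X Y Z (g1 g2 : L Y Z) (f : L X Y) : lcomp (g1 + g2)%R f = (lcomp g1 f + lcomp g2 f)%R.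
Proof. by have := @lcomp_linl _ C _ _ _ 1 g1 g2 f; rewrite !scale1r. Qed.

Lemma lcompDr X Y Z (g : L Y Z) (f1 f2 : L X Y) : lcomp g (f1 + f2)%R = (lcomp g f1 + lcomp g f2)%R.
Proof. by have := @lcomp_linr _ C _ _ _ 1 g f1 f2; rewrite !scale1r. Qed.

Lemma lcomp0l X Y Z (f : L X Y) : lcomp (0 : L Y Z)%R f = 0%R.
Proof.
have := lcompDl (0 : L Y Z) 0 f; rewrite addr0 => H.
have := congr1 (fun t => (t - lcomp 0 f)%R) H; rewrite subrr addrK => <-. done.
Qed.

Lemma lcomp0r X Y Z (g : L Y Z) : lcomp g (0 : L X Y)%R = 0%R.
Proof.
have := lcompDr g (0 : L X Y) 0; rewrite addr0 => H.
have := congr1 (fun t => (t - lcomp g 0)%R) H; rewrite subrr addrK => <-. done.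
Qed.

Lemma lcompZl X Y Z (a : k) (g : L Y Z) (f : L X Y) : lcomp (a *: g)%R f = (a *: lcomp g f)%R.
Proof. by have := @lcomp_linl _ C _ _ _ a g 0 f; rewrite !addr0 lcomp0l addr0. Qed.

Lemma lcompZr X Y Z (a : k) (g : L Y Z) (f : L X Y) : lcomp g (a *: f)%R = (a *: lcomp g f)%R.
Proof. by have := @lcomp_linr _ C _ _ _ a g f 0; rewrite !addr0 lcomp0r addr0. Qed.

Lemma ohom_compA (a b c ab bc abc : int) (e1 : (a + b)%R = ab) (e2 : (ab + c)%R = abc)
  (e3 : (b + c)%R = bc) (e4 : (a + bc)%R = abc) X Y Z W
  (F : ohom S a X Y) (G : ohom S b Y Z) (K : ohom S c Z W) :
  ohom_comp e2 K (ohom_comp e1 G F) = ohom_comp e4 (ohom_comp e3 K G) F.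
Proof.
elim/ohom_ind: F => x; elim/ohom_ind: G => y; elim/ohom_ind: K => z.
have h1 : rq x <= rq x + rp y + rp z by lia.
have h2 : rp y <= rq x + rp y + rp z by lia.
have [p [dx [f ->]]] := rep_at_q h1.
have [q1 [dy [g ->]]] := rep_at_p h2.
have h3 : rp z <= q1 by have := nat_of_diff dy (rdiff y); lia.
have [q2 [dz [h ->]]] := rep_at_p h3.
by rewrite !comp_simple lcompA; apply: ocls_pi.
Qed.

Lemma ohom_comp1l (a b : int) (e : (a + b)%R = a) X Y
  (d0 : ((0%N)%:Z - (0%N)%:Z)%R = b) (F : ohom S a X Y) :
  ohom_comp e (ocls (@ORep _ _ S b Y Y 0 0 d0 (lidm Y))) F = F.
Proof.
elim/ohom_ind: F => x; case: x => p q dx f.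
have dq : (q%:Z - q%:Z)%R = b by rewrite subrr -d0 subrr.
by rewrite -(ocls_id Y dq d0) comp_simple lcomp1m; apply: ocls_pi.
Qed.

Lemma ohom_comp1r (a b : int) (e : (b + a)%R = a) X Y
  (d0 : ((0%N)%:Z - (0%N)%:Z)%R = b) (F : ohom S a X Y) :
  ohom_comp e F (ocls (@ORep _ _ S b X X 0 0 d0 (lidm X))) = F.
Proof.
elim/ohom_ind: F => x; case: x => p q dx f.
have dp : (p%:Z - p%:Z)%R = b by rewrite subrr -d0 subrr.
by rewrite -(ocls_id X dp d0) comp_simple lcompm1; apply: ocls_pi.
Qed.

Lemma ohom_comp_addl (a b c : int) (e : (a + b)%R = c) X Y Z
  (G1 G2 : ohom S b Y Z) (F : ohom S a X Y) :
  ohom_comp e (ohom_add G1 G2) F = ohom_add (ohom_comp e G1 F) (ohom_comp e G2 F).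
Proof.
elim/ohom_ind: F => x; elim/ohom_ind: G1 => y1; elim/ohom_ind: G2 => y2.
have h1 : rq x <= rq x + rp y1 + rp y2 by lia.
have h2 : rp y1 <= rq x + rp y1 + rp y2 by lia.
have h3 : rp y2 <= rq x + rp y1 + rp y2 by lia.
have [p [dx [f ->]]] := rep_at_q h1.
have [q1 [d1 [g1 ->]]] := rep_at_p h2.
have [q2 [d2 [g2 ->]]] := rep_at_p h3.
have eq : q2 = q1 by have := nat_of_diff d1 d2; lia.
subst q2.
by rewrite add_same !comp_simple add_same lcompDl; apply: ocls_pi.
Qed.

Lemma ohom_comp_addr (a b c : int) (e : (a + b)%R = c) X Y Z
  (G : ohom S b Y Z) (F1 F2 : ohom S a X Y) :
  ohom_comp e G (ohom_add F1 F2) = ohom_add (ohom_comp e G F1) (ohom_comp e G F2).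
Proof.
elim/ohom_ind: G => y; elim/ohom_ind: F1 => x1; elim/ohom_ind: F2 => x2.
have h1 : rp y <= rp y + rq x1 + rq x2 by lia.
have h2 : rq x1 <= rp y + rq x1 + rq x2 by lia.
have h3 : rq x2 <= rp y + rq x1 + rq x2 by lia.
have [q [dy [g ->]]] := rep_at_p h1.
have [p1 [d1 [f1 ->]]] := rep_at_q h2.
have [p2 [d2 [f2 ->]]] := rep_at_q h3.
have eq : p2 = p1 by have := nat_of_diff d1 d2; lia.
subst p2.
by rewrite add_same !comp_simple add_same lcompDr; apply: ocls_pi.
Qed.

Lemma ohom_scale_same (s : k) r X Y p q (d : (q%:Z - p%:Z)%R = r) (f : L (Sn p X) (Sn q Y)) :
  ohom_scale s (ocls (ORep d f)) = ocls (ORep d (s *: f)%R).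
Proof. exact: ohom_scaleE. Qed.

Lemma ohom_comp_scalel (a b c : int) (e : (a + b)%R = c) X Y Z (s : k)
  (G : ohom S b Y Z) (F : ohom S a X Y) :
  ohom_comp e (ohom_scale s G) F = ohom_scale s (ohom_comp e G F).
Proof.
elim/ohom_ind: F => x; elim/ohom_ind: G => y.
have h1 : rq x <= rq x + rp y by lia.
have h2 : rp y <= rq x + rp y by lia.
have [p [dx [f ->]]] := rep_at_q h1.
have [q [dy [g ->]]] := rep_at_p h2.
by rewrite ohom_scale_same !comp_simple ohom_scale_same lcompZl.
Qed.

Lemma ohom_comp_scaler (a b c : int) (e : (a + b)%R = c) X Y Z (s : k)
  (G : ohom S b Y Z) (F : ohom S a X Y) :
  ohom_comp e G (ohom_scale s F) = ohom_scale s (ohom_comp e G F).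
Proof.
elim/ohom_ind: F => x; elim/ohom_ind: G => y.
have h1 : rq x <= rq x + rp y by lia.
have h2 : rp y <= rq x + rp y by lia.
have [p [dx [f ->]]] := rep_at_q h1.
have [q [dy [g ->]]] := rep_at_p h2.
by rewrite ohom_scale_same !comp_simple ohom_scale_same lcompZr.
Qed.


Lemma ecast_comp (a b c a' b' c' : int) (e : (a + b)%R = c) (e' : (a' + b')%R = c')
  (ea : a = a') (eb : b = b') (ec : c = c') X Y Z (G : ohom S b Y Z) (F : ohom S a X Y) :
  ecast r (ohom S r X Z) ec (ohom_comp e G F) =
  ohom_comp e' (ecast r (ohom S r Y Z) eb G) (ecast r (ohom S r X Y) ea F).
Proof.
case: a' / ea e'; case: b' / eb; case: c' / ec => e' /=.
by rewrite (proof_irrelevance _ e e').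
Qed.

Lemma ecast_add (a a' : int) (ea : a = a') X Y (F G : ohom S a X Y) :
  ecast r (ohom S r X Y) ea (ohom_add F G) =
  ohom_add (ecast r (ohom S r X Y) ea F) (ecast r (ohom S r X Y) ea G).
Proof. by case: a' / ea. Qed.

Lemma ecast_scale (a a' : int) (ea : a = a') X Y (s : k) (F : ohom S a X Y) :
  ecast r (ohom S r X Y) ea (ohom_scale s F) = ohom_scale s (ecast r (ohom S r X Y) ea F).
Proof. by case: a' / ea. Qed.

Lemma ecast_ocls (a a' : int) (ea : a = a') X Y p q (d : (q%:Z - p%:Z)%R = a)
  (d' : (q%:Z - p%:Z)%R = a') (f : L (Sn p X) (Sn q Y)) :
  ecast r (ohom S r X Y) ea (ocls (ORep d f)) = ocls (ORep d' f).
Proof. case: a' / ea d' => d' /=; exact: ocls_pi. Qed.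

Lemma ecastK (a a' : int) (ea : a = a') X Y (F : ohom S a X Y) :
  ecast r (ohom S r X Y) (esym ea) (ecast r (ohom S r X Y) ea F) = F.
Proof. by case: a' / ea. Qed.

Lemma ecastKV (a a' : int) (ea : a = a') X Y (F : ohom S a' X Y) :
  ecast r (ohom S r X Y) ea (ecast r (ohom S r X Y) (esym ea) F) = F.
Proof. by case: a' / ea F. Qed.

Lemma Sprime_auto : is_automorphism (Sprime S).
Proof.
split.
- split.
  + move=> [X i] [Y j] [Z l] G F /=; exact: ecast_comp.
  + move=> [X i] /=; exact: ecast_ocls.
  + move=> [X i] [Y j] F G /=; exact: ecast_add.
  + move=> [X i] [Y j] s F /=; exact: ecast_scale.
- exists (fun Xi : lobj C * int => (Xi.1, Xi.2 + 1)%R) => [[X i]|[X i]] /=; congr pair; lia.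
- move=> [X i] [Y j] /=.
  exists (fun B => ecast r (ohom S r X Y) (esym (diff_shift i j)) B) => B.
  + exact: ecastK.
  + exact: ecastKV.
Qed.

Lemma natiso_SH : natiso (comp_functor (Sprime S) (Hfun S)) (comp_functor (Hfun S) S).
Proof.
have d1 : ((0%N)%:Z - (1%N)%:Z)%R = ((0 - 1) - 0)%R by lia.
have d2 : ((1%N)%:Z - (0%N)%:Z)%R = (0 - (0 - 1))%R by lia.
exists (fun X => ocls (@ORep _ _ S _ X (fobj S X) 1 0 d1
                   (lidm (fobj S X) : L (Sn 1 X) (Sn 0 (fobj S X))))).
split.
- move=> X.
  exists (ocls (@ORep _ _ S _ (fobj S X) X 0 1 d2
                   (lidm (fobj S X) : L (Sn 0 (fobj S X)) (Sn 1 X)))).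
  split => /=.
  + by rewrite comp_simple lcomp1m; apply: ocls_pi.
  + rewrite comp_simple lcomp1m; exact: ocls_id.
- move=> X Y f /=.
  have d0 : ((0%N)%:Z - (0%N)%:Z)%R = ((0 - 1) - (0 - 1))%R by lia.
  rewrite (ecast_ocls _ _ d0) -(ocls_lift 1 (ORep d0 f)).
  rewrite comp_simple /liftrep comp_simple.
  by rewrite lcomp1m lcompm1; apply: ocls_pi.
Qed.


Lemma natiso_faithful (F G : functor C C) : natiso (comp_functor G F) (id_functor C) ->
  forall X Y (f g : L X Y), @fhom _ _ _ F X Y f = fhom F g -> f = g.
Proof.
case=> eta [Hiso Hnat] X Y f g E.
have [h [/= h1 /= h2]] := Hiso X.
have key : forall f0 : L X Y, f0 = lcomp (lcomp (eta Y) (fhom G (fhom F f0))) h.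
  move=> f0; have /= Hn := Hnat X Y f0.
  by rewrite -Hn -lcompA h1 lcompm1.
by rewrite (key f) (key g) E.
Qed.

Lemma equiv_full (F G : functor C C) :
  natiso (comp_functor G F) (id_functor C) -> natiso (comp_functor F G) (id_functor C) ->
  forall X Y (h : L (fobj F X) (fobj F Y)), exists g : L X Y, fhom F g = h.
Proof.
move=> [eta [Hiso Hnat]] HFG X Y h.
have [hX [/= hX1 /= hX2]] := Hiso X.
have [hY [/= hY1 /= hY2]] := Hiso Y.
exists (lcomp (lcomp (eta Y) (fhom G h)) hX).
apply: (natiso_faithful HFG).
set g := lcomp _ hX.
have /= Hn := Hnat X Y g.
transitivity (lcomp hY (lcomp (eta Y) (fhom G (fhom F g)))).
  by rewrite lcompA hY2 lcomp1m.
rewrite -Hn /g.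
by rewrite -!lcompA hX2 lcompm1 !lcompA hY2 lcomp1m.
Qed.


Lemma rfJ r X Y (x y : rep r X Y) : x = y -> JMeq (rf x) (rf y).
Proof. by move->. Qed.

Lemma lift_inj (Sfaith : forall X Y (f g : L X Y), @fhom _ _ _ S X Y f = fhom S g -> f = g)
  n X Y p q (f g : L (Sn p X) (Sn q Y)) : lift n f = lift n g -> f = g.
Proof. elim: n => [|n IH] //= E; apply: IH; exact: Sfaith E. Qed.

Lemma lift_full (Sfull : forall X Y (h : L (fobj S X) (fobj S Y)), exists g : L X Y, fhom S g = h)
  m X Y (f : L (Sn m X) (Sn m Y)) : exists g : L X Y, JMeq (lift m (g : L (Sn 0 X) (Sn 0 Y))) f.
Proof.
elim: m f => [|m IH] f; first by exists f.
have [f' Ef'] := Sfull (Sn m X) (Sn m Y) f.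
have [g Eg] := IH f'.
exists g => /=; rewrite -Ef'; apply: fhomJ => //; objeq.
Qed.

Lemma H_inj (Sfaith : forall X Y (f g : L X Y), @fhom _ _ _ S X Y f = fhom S g -> f = g)
  X Y (f g : L X Y) :
  ocls (@ORep _ _ S _ X Y 0 0 (diff00 0) f) = ocls (@ORep _ _ S _ X Y 0 0 (diff00 0) g) -> f = g.
Proof.
move/ocls_eq/orelP=> [a [b E]].
have eab : a = b by have := f_equal (@rp _ _ _ _ _ _) E; rewrite /= !addn0.
subst b; apply: (@lift_inj Sfaith a X Y 0 0).
exact: JMeq_eq (rfJ E).
Qed.

Lemma H_surj (Sfull : forall X Y (h : L (fobj S X) (fobj S Y)), exists g : L X Y, fhom S g = h)
  X Y (A : ohom S (0 - 0) X Y) : exists f : L X Y, ocls (@ORep _ _ S _ X Y 0 0 (diff00 0) f) = A.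
Proof.
elim/ohom_ind: A => -[p q d f].
have epq : q = p by lia.
subst q.
have [g Eg] := lift_full Sfull f.
exists g; rewrite -(ocls_lift p); congr ocls; apply: orep_ext => /=; [lia|lia|exact: Eg].
Qed.

Lemma Scomp X Y Z (g : L Y Z) (f : L X Y) : fhom S (lcomp g f) = lcomp (fhom S g) (fhom S f).
Proof. case: HS => Hc _ _ _; exact: Hc. Qed.

Lemma Sid X : fhom S (lidm X) = lidm (fobj S X).
Proof. case: HS => _ Hi _ _; exact: Hi. Qed.

Fixpoint Gi (G' : functor C C) (n : nat) (X : lobj C) : lobj C :=
  match n with 0 => X | n'.+1 => Gi G' n' (fobj G' X) end.

Fixpoint phi (G' : functor C C) (eps : forall X, L (fobj S (fobj G' X)) X) (n : nat) (X : lobj C) :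
    L (Sn n (Gi G' n X)) X :=
  match n return L (Sn n (Gi G' n X)) X with
  | 0 => lidm X
  | n'.+1 => lcomp (eps X) (fhom S (phi eps n' (fobj G' X)))
  end.

Fixpoint psi (G' : functor C C) (epsi : forall X, L X (fobj S (fobj G' X))) (n : nat) (X : lobj C) :
    L X (Sn n (Gi G' n X)) :=
  match n return L X (Sn n (Gi G' n X)) with
  | 0 => lidm X
  | n'.+1 => lcomp (fhom S (psi epsi n' (fobj G' X))) (epsi X)
  end.

Lemma phipsi (G' : functor C C) (eps : forall X, L (fobj S (fobj G' X)) X) (epsi : forall X, L X (fobj S (fobj G' X)))
  (epsK : forall X, lcomp (eps X) (epsi X) = lidm X) n X :
  lcomp (phi eps n X) (psi epsi n X) = lidm X.
Proof.
elim: n X => [|n IH] X /=; first exact: lcomp1m.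
rewrite -!lcompA [lcomp (fhom S _) (lcomp _ _)]lcompA -Scomp IH Sid lcomp1m.
exact: epsK.
Qed.

Lemma psiphi (G' : functor C C) (eps : forall X, L (fobj S (fobj G' X)) X) (epsi : forall X, L X (fobj S (fobj G' X)))
  (epsKV : forall X, lcomp (epsi X) (eps X) = lidm (fobj S (fobj G' X))) n X :
  lcomp (psi epsi n X) (phi eps n X) = lidm (Sn n (Gi G' n X)).
Proof.
elim: n X => [|n IH] X /=; first exact: lcomp1m.
rewrite -!lcompA [lcomp (epsi X) (lcomp _ _)]lcompA epsKV lcomp1m -Scomp IH.
exact: Sid.
Qed.

Definition iso_data (O : lobj C * int) :=
  { Y : lobj C & { uv : ohom S (0 - O.2) Y O.1 * ohom S (O.2 - 0) O.1 Y |
     ohom_comp (diff_trans O.2 0 O.2) uv.1 uv.2 = ocls (@ORep _ _ S _ _ _ 0 0 (diff00 O.2) (lidm O.1)) /\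
     ohom_comp (diff_trans 0 O.2 0) uv.2 uv.1 = ocls (@ORep _ _ S _ _ _ 0 0 (diff00 0) (lidm Y)) } }.

Lemma ess_surj (G' : functor C C) (eps : forall X, L (fobj S (fobj G' X)) X) (epsi : forall X, L X (fobj S (fobj G' X)))
  (epsK : forall X, lcomp (eps X) (epsi X) = lidm X)
  (epsKV : forall X, lcomp (epsi X) (eps X) = lidm (fobj S (fobj G' X))) O : iso_data O.
Proof.
case: O => X [] n.
- exists (Gi G' n X).
  have du : ((0%N)%:Z - n%:Z)%R = (0 - Posz n)%R by lia.
  have dv : (n%:Z - (0%N)%:Z)%R = (Posz n - 0)%R by lia.
  exists (ocls (@ORep _ _ S _ (Gi G' n X) X n 0 du (phi eps n X)),
          ocls (@ORep _ _ S _ X (Gi G' n X) 0 n dv (psi epsi n X))) => /=.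
  split.
  + by rewrite comp_simple phipsi //; apply: ocls_pi.
  + rewrite comp_simple psiphi //; exact: ocls_id.
- exists (Sn n.+1 X).
  have du : ((n.+1)%:Z - (0%N)%:Z)%R = (0 - Negz n)%R by rewrite NegzE; lia.
  have dv : ((0%N)%:Z - (n.+1)%:Z)%R = (Negz n - 0)%R by rewrite NegzE; lia.
  exists (ocls (@ORep _ _ S _ (Sn n.+1 X) X 0 n.+1 du (lidm (Sn n.+1 X))),
          ocls (@ORep _ _ S _ X (Sn n.+1 X) n.+1 0 dv (lidm (Sn n.+1 X)))) => /=.
  split.
  + rewrite comp_simple lcomp1m; exact: ocls_id.
  + by rewrite comp_simple lcomp1m; apply: ocls_pi.
Qed.


Local Notation SM := (smash S).

Lemma sm_compA (O1 O2 O3 O4 : Defs.obj SM) (f : Defs.hom SM O1 O2) (g : Defs.hom SM O2 O3) (h : Defs.hom SM O3 O4) :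
  Defs.comp h (Defs.comp g f) = Defs.comp (Defs.comp h g) f.
Proof. exact: ohom_compA. Qed.

Lemma sm_comp1l (O1 O2 : Defs.obj SM) (f : Defs.hom SM O1 O2) : Defs.comp (Defs.idm O2) f = f.
Proof. exact: ohom_comp1l. Qed.

Lemma sm_comp1r (O1 O2 : Defs.obj SM) (f : Defs.hom SM O1 O2) : Defs.comp f (Defs.idm O1) = f.
Proof. exact: ohom_comp1r. Qed.

Lemma sm_addl (O1 O2 O3 : Defs.obj SM) (g1 g2 : Defs.hom SM O2 O3) (f : Defs.hom SM O1 O2) :
  Defs.comp (Defs.hadd g1 g2) f = Defs.hadd (Defs.comp g1 f) (Defs.comp g2 f).
Proof. exact: ohom_comp_addl. Qed.

Lemma sm_addr (O1 O2 O3 : Defs.obj SM) (g : Defs.hom SM O2 O3) (f1 f2 : Defs.hom SM O1 O2) :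
  Defs.comp g (Defs.hadd f1 f2) = Defs.hadd (Defs.comp g f1) (Defs.comp g f2).
Proof. exact: ohom_comp_addr. Qed.

Lemma sm_scalel (O1 O2 O3 : Defs.obj SM) (s : k) (g : Defs.hom SM O2 O3) (f : Defs.hom SM O1 O2) :
  Defs.comp (Defs.hscale s g) f = Defs.hscale s (Defs.comp g f).
Proof. exact: ohom_comp_scalel. Qed.

Lemma sm_scaler (O1 O2 O3 : Defs.obj SM) (s : k) (g : Defs.hom SM O2 O3) (f : Defs.hom SM O1 O2) :
  Defs.comp g (Defs.hscale s f) = Defs.hscale s (Defs.comp g f).
Proof. exact: ohom_comp_scaler. Qed.

Lemma H_comp X Y Z (g : L Y Z) (f : L X Y) :
  fhom (Hfun S) (lcomp g f) = Defs.comp (fhom (Hfun S) g) (fhom (Hfun S) f).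
Proof. by rewrite /= comp_simple; apply: ocls_pi. Qed.

Lemma H_add X Y (f g : L X Y) :
  fhom (Hfun S) (f + g)%R = Defs.hadd (fhom (Hfun S) f) (fhom (Hfun S) g).
Proof. by rewrite /= add_same. Qed.

Lemma H_scale X Y (s : k) (f : L X Y) :
  fhom (Hfun S) (s *: f)%R = Defs.hscale s (fhom (Hfun S) f).
Proof. by rewrite /= ohom_scale_same. Qed.

Lemma H_lin : is_linfunctor (Hfun S).
Proof.
split.
- move=> X Y Z g f; exact: H_comp.
- by [].
- move=> X Y f g; exact: H_add.
- move=> X Y s f; exact: H_scale.
Qed.

Lemma H_equiv (G' : functor C C) :
  natiso (comp_functor G' S) (id_functor C) -> natiso (comp_functor S G') (id_functor C) ->
  is_equivalence (Hfun S).
Proof.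
move=> HGS HSG.
have Sfaith := natiso_faithful HGS.
have Sfull := equiv_full HGS HSG.
have [eps [Hiso _]] := HSG.
pose epsi X := proj1_sig (constructive_indefinite_description _ (Hiso X)).
have epsK X : lcomp (eps X) (epsi X) = lidm X.
  exact: (proj2_sig (constructive_indefinite_description _ (Hiso X))).1.
have epsKV X : lcomp (epsi X) (eps X) = lidm (fobj S (fobj G' X)).
  exact: (proj2_sig (constructive_indefinite_description _ (Hiso X))).2.
pose ES := ess_surj epsK epsKV.
have Hinj X Y (f g : L X Y) : fhom (Hfun S) f = fhom (Hfun S) g -> f = g.
  move=> E; exact: (H_inj Sfaith E).
pose Hinv X Y (A : Defs.hom SM (X, 0%R) (Y, 0%R)) : L X Y :=
  proj1_sig (constructive_indefinite_description _ (H_surj Sfull A)).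
have HinvK X Y (A : Defs.hom SM (X, 0%R) (Y, 0%R)) : fhom (Hfun S) (Hinv X Y A) = A.
  exact: (proj2_sig (constructive_indefinite_description _ (H_surj Sfull A))).
pose GO O := projT1 (ES O).
pose u O : Defs.hom SM (GO O, 0%R) O := (proj1_sig (projT2 (ES O))).1.
pose v O : Defs.hom SM O (GO O, 0%R) := (proj1_sig (projT2 (ES O))).2.
have uv O : Defs.comp (u O) (v O) = @Defs.idm _ SM O.
  exact: (proj2_sig (projT2 (ES O))).1.
have vu O : Defs.comp (v O) (u O) = @Defs.idm _ SM (GO O, 0%R).
  exact: (proj2_sig (projT2 (ES O))).2.
pose Gmap O O' (A : Defs.hom SM O O') : L (GO O) (GO O') := Hinv _ _ (Defs.comp (v O') (Defs.comp A (u O))).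
pose Gf := @Functor k SM C GO Gmap.
have Gcomp O1 O2 O3 (B : Defs.hom SM O2 O3) (A : Defs.hom SM O1 O2) :
    Gmap _ _ (Defs.comp B A) = lcomp (Gmap _ _ B) (Gmap _ _ A).
  apply: Hinj; rewrite H_comp !HinvK !sm_compA.
  by rewrite -(sm_compA (v O2) (u O2) (Defs.comp (v O3) B)) uv sm_comp1r.
split; first exact: H_lin.
exists Gf; split; [split|split].
- move=> O1 O2 O3 B A; exact: Gcomp.
- move=> O; apply: Hinj; rewrite HinvK sm_comp1l vu; by [].
- move=> O O' A B; apply: Hinj; rewrite H_add !HinvK sm_addl sm_addr; by [].
- move=> O O' s A; apply: Hinj; rewrite H_scale !HinvK sm_scalel sm_scaler; by [].
- exists (fun X => Hinv _ _ (u (X, 0%R))); split.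
  + move=> X; exists (Hinv _ _ (v (X, 0%R))); split; apply: Hinj.
    * by rewrite H_comp !HinvK uv.
    * by rewrite H_comp !HinvK vu.
  + move=> X Y f; apply: Hinj.
    rewrite H_comp H_comp !HinvK.
    by rewrite (sm_compA _ (v (Y, 0%R)) (u (Y, 0%R))) (uv (Y, 0%R)) sm_comp1l.
- exists u; split.
  + move=> O; exists (v O); split; [exact: uv | exact: vu].
  + move=> O O' A.
    have E : fhom (comp_functor (Hfun S) Gf) A = Defs.comp (v O') (Defs.comp A (u O)) := HinvK _ _ _.
    by rewrite E (sm_compA _ (v O') (u O')) (uv O') sm_comp1l.
Qed.

End Orb.

Theorem mainTheorem17 (k : comPzRingType) (C : LinCat k) (S : functor C C) :
  is_equivalence S ->
  [/\ is_automorphism (Sprime S),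
      is_equivalence (Hfun S)
    & natiso (comp_functor (Sprime S) (Hfun S)) (comp_functor (Hfun S) S)].
Proof.
case=> HS [G' [_ [HGS HSG]]].
split; [exact: Sprime_auto | exact: (H_equiv HS HGS HSG) | exact: natiso_SH HS].
Qed.
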